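(* Let $(G,S,k)$ be an instance of \textsc{Edge Subset Feedback Vertex Set}, let $T=V(S)$, let $X$ be a dominant solution for $(G,S,k)$, and let $x$ be any vertex of $X_0=X\setminus T$. Then there exist $|X|+2$ paths in $G-S$, each starting in $T$ and ending in $X$, that are pairwise vertex-disjoint except for three of the paths, which all end in $x$ (and share only this vertex). Moreover, these paths can be chosen so that every connected component of $G-X-S$ is intersected by at most one of the paths.
   Context: Graphs are finite and undirected and may contain loops and parallel edges (so cycles of length one and two are allowed). An instance of \textsc{Edge Subset Feedback Vertex Set} is $(G,S,k)$ with $G=(V,E)$, $S\subseteq E$, $k\in\mathbb{N}$. An $S$-cycle is a cycle containing at least one edge of $S$. A solution is a set $X\subseteq V$ with $|X|\le k$ such that $G-X$ contains no $S$-cycle. $V(S)$ denotes the set of vertices incident with at least one edge of $S$. $G-S$ denotes $(V,E\setminus S)$ and $G-X-S$ denotes $(G-X)-S$. A solution $X$ is dominant if it has minimum size among all solutions and, among minimum-size solutions, contains the maximum possible number of vertices of $T=V(S)$. Paths may have length zero (a single vertex). *)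

(* Defs.v *)
From mathcomp Require Import all_boot.
Set Implicit Arguments. Unset Strict Implicit. Unset Printing Implicit Defensive.

(* A finite undirected multigraph (loops and parallel edges allowed):
   vertex type V, edge type E, each edge e has endpoints src e and tgt e
   (unordered; a loop has src e = tgt e). *)

Section Graph.
Variables (V E : finType) (src tgt : E -> V).

Definition joins (e : E) (u w : V) : bool :=
  ((src e == u) && (tgt e == w)) || ((src e == w) && (tgt e == u)).

Definition VS (S : {set E}) : {set V} :=
  [set v | [exists e in S, (src e == v) || (tgt e == v)]].

(* A cycle of length n.+1 >= 1: distinct vertices vs 0..n, distinct edges
   es 0..n, edge es i joins vs i and vs (i+1 mod n+1). Length 1 = loop,
   length 2 = two distinct parallel edges. *)
Definition is_cycle n (vs : 'I_n.+1 -> V) (es : 'I_n.+1 -> E) : Prop :=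
  injective vs /\ injective es /\ forall i, joins (es i) (vs i) (vs (ordS i)).

Definition no_S_cycle (S : {set E}) (X : {set V}) : Prop :=
  ~ exists n (vs : 'I_n.+1 -> V) (es : 'I_n.+1 -> E),
      [/\ is_cycle vs es, forall i, vs i \notin X & exists i, es i \in S].

Definition is_solution (S : {set E}) (k : nat) (X : {set V}) : Prop :=
  #|X| <= k /\ no_S_cycle S X.

Definition dominant (S : {set E}) (k : nat) (X : {set V}) : Prop :=
  is_solution S k X /\
  forall Y : {set V}, is_solution S k Y ->
    #|X| <= #|Y| /\ (#|Y| = #|X| -> #|Y :&: VS S| <= #|X :&: VS S|).

Definition adjGS (S : {set E}) : rel V :=
  fun u w => [exists e, (e \notin S) && joins e u w].

Definition adjGXS (S : {set E}) (X : {set V}) : rel V :=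
  fun u w => [&& adjGS S u w, u \notin X & w \notin X].

Definition is_path_GS (S : {set E}) (p : seq V) : bool :=
  if p is v :: s then uniq p && path (adjGS S) v s else false.

End Graph.

(* Main.v *)
Require Import Defs.
From mathcomp Require Import all_boot.
From mathcomp Require Import zify.
Set Implicit Arguments. Unset Strict Implicit. Unset Printing Implicit Defensive.


Section Basics.
Variables (V E : finType) (src tgt : E -> V).

Definition adjF (F : {set E}) (D : {set V}) : rel V :=
  fun u w => [&& [exists e in F, joins src tgt e u w], u \notin D & w \notin D].

Lemma joinsC e u w : joins src tgt e u w = joins src tgt e w u.
Proof. by rewrite /joins orbC. Qed.

Lemma joins_inv e u w u' w' : joins src tgt e u w -> joins src tgt e u' w' ->
  (u = u' /\ w = w') \/ (u = w' /\ w = u').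
Proof.
rewrite /joins => /orP[]/andP[/eqP<- /eqP<-] /orP[]/andP[/eqP<- /eqP<-]; tauto.
Qed.

Lemma adjF_sym F D : symmetric (adjF F D).
Proof.
move=> u w; rewrite /adjF; congr andb; last by rewrite andbC.
by apply/existsP/existsP=> -[e /andP[eF J]]; exists e; rewrite eF joinsC.
Qed.

Lemma adjF_csym F D : connect_sym (adjF F D).
Proof. apply: sym_connect_sym; exact: adjF_sym. Qed.

Lemma adjF_mono (F F' : {set E}) (D D' : {set V}) : F \subset F' -> D' \subset D ->
  subrel (connect (adjF F D)) (connect (adjF F' D')).
Proof.
move=> sF sD; apply: connect_sub => u w /and3P[/existsP[e /andP[eF J]] uD wD].
apply: connect1; apply/and3P; split.
- by apply/existsP; exists e; rewrite J (subsetP sF).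
- by apply: contra uD; apply: (subsetP sD).
- by apply: contra wD; apply: (subsetP sD).
Qed.

Lemma adjGXS_F (S : {set E}) (X : {set V}) : adjGXS src tgt S X =2 adjF (~: S) X.
Proof.
move=> u w; rewrite /adjGXS /adjF /adjGS; congr andb.
by apply/existsP/existsP=> -[e H]; exists e; move: H; rewrite inE.
Qed.

Lemma adjGS_sym (S : {set E}) : symmetric (adjGS src tgt S).
Proof.
move=> u w; apply/existsP/existsP=> -[e /andP[eS J]]; exists e; by rewrite eS joinsC.
Qed.

Lemma first_bad (R Q : rel V) (good : pred V) (P : V -> Prop) a b :
  (forall c d, good c -> R c d -> (Q c d && good d) \/ P c) ->
  good a -> connect R a b -> connect Q a b \/ exists2 c, connect Q a c & P c.
Proof.
move=> H ga /connectP[p pR ->]; elim: p a ga pR => [|d p IH] a ga /=.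
  by left.
case/andP=> Rad pR; case: (H a d ga Rad) => [/andP[Qad gd]|Pa].
  case: (IH d gd pR) => [Cd|[c Cc Pc]].
    by left; apply: connect_trans Cd; apply: connect1.
  by right; exists c => //; apply: connect_trans Cc; apply: connect1.
by right; exists a.
Qed.

End Basics.


Section Hall.
Variables (I J : finType) (j0 : J).

Definition covr (N : I -> {set J}) (L : {set I}) := \bigcup_(i in L) N i.

Lemma covrU N (L1 L2 : {set I}) : covr N (L1 :|: L2) = covr N L1 :|: covr N L2.
Proof.
apply/setP=> j; rewrite inE; apply/bigcupP/orP.
  by case=> i; rewrite inE => /orP[] iL jN; [left|right]; apply/bigcupP; exists i.
by case=> /bigcupP[i iL jN]; exists i; rewrite // inE iL ?orbT.
Qed.

Lemma covr_sub N (L1 L2 : {set I}) : L1 \subset L2 -> covr N L1 \subset covr N L2.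
Proof.
move=> s; apply/subsetP=> j /bigcupP[i iL jN]; apply/bigcupP; exists i => //.
exact: (subsetP s).
Qed.

Lemma hall_gen n : forall (A : {set I}) (N : I -> {set J}), #|A| <= n ->
  (forall L : {set I}, L \subset A -> #|L| <= #|covr N L|) ->
  exists f : I -> J, {in A &, injective f} /\ {in A, forall i, f i \in N i}.
Proof.
elim: n => [|n IH] A N szA HN.
  have A0 : A = set0 by apply/eqP; rewrite -cards_eq0; lia.
  by exists (fun _ => j0); split=> i; rewrite A0 inE.
case: (boolP [exists L : {set I}, [&& L \proper A, L != set0 & #|covr N L| <= #|L|]]).
- case/existsP=> L /and3P[LA L0 tight].
  have sLA : L \subset A by apply: proper_sub.
  have [f1 [inj1 N1]] : exists f : I -> J, {in L &, injective f} /\ {in L, forall i, f i \in N i}.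
    apply: (IH L N); first by have := proper_card LA; lia.
    by move=> L' sL'; apply: HN; apply: subset_trans sL' sLA.
  pose N' i := N i :\: covr N L.
  have [f2 [inj2 N2]] : exists f : I -> J, {in A :\: L &, injective f} /\ {in A :\: L, forall i, f i \in N' i}.
    apply: IH.
      have := cardsD A L; rewrite (setIidPr sLA).
      have : 0 < #|L| by rewrite card_gt0.
      lia.
    move=> C sC.
    have eqC : covr N' C = covr N (C :|: L) :\: covr N L.
      rewrite covrU setDUl setDv setU0; apply/setP=> j; rewrite inE.
      apply/bigcupP/andP.
        by case=> i iC; rewrite inE => /andP[a b]; split => //; apply/bigcupP; exists i.
      by case=> a /bigcupP[i iC jN]; exists i; rewrite // inE a.
    have disj : [disjoint C & L].
      apply/pred0P=> i /=; apply/negP=> /andP[iC iL].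
      by move: (subsetP sC i iC); rewrite inE iL.
    have sCL : C :|: L \subset A.
      by apply/subsetP=> i; rewrite inE => /orP[/(subsetP sC)|/(subsetP sLA)] //; rewrite inE => /andP[].
    have h1 := HN _ sCL.
    have h2 := HN _ sLA.
    rewrite eqC cardsD (setIidPr (covr_sub N (subsetUr C L))).
    move: h1; rewrite cardsU (disjoint_setI0 disj) cards0.
    lia.
  exists (fun i => if i \in L then f1 i else f2 i); split.
    move=> i j iA jA; case: ifP => iL; case: ifP => jL.
    + exact: inj1.
    + move=> e; have : f2 j \in N' j by apply: N2; rewrite inE jL.
      rewrite -e inE => /andP[/negP[]]; apply/bigcupP; exists i => //; exact: N1.
    + move=> e; have : f2 i \in N' i by apply: N2; rewrite inE iL.
      rewrite e inE => /andP[/negP[]]; apply/bigcupP; exists j => //; exact: N1.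
    + by apply: inj2; rewrite inE ?iL ?jL.
  move=> i iA; case: ifP => iL; first exact: N1.
  have : f2 i \in N' i by apply: N2; rewrite inE iL.
  by rewrite inE => /andP[].
- move/existsPn=> loose.
  case: (set_0Vmem A) => [A0|[i0 i0A]].
    by exists (fun _ => j0); split=> i; rewrite A0 inE.
  have : 0 < #|N i0|.
    have := HN [set i0]; rewrite sub1set i0A cards1 => /(_ isT).
    suff -> : covr N [set i0] = N i0 by [].
    by rewrite /covr big_set1.
  rewrite card_gt0 => /set0Pn[j1 j1N].
  pose N' i := N i :\ j1.
  have [f2 [inj2 N2]] : exists f : I -> J, {in A :\ i0 &, injective f} /\ {in A :\ i0, forall i, f i \in N' i}.
    apply: IH.
      by have := cardsD1 i0 A; rewrite i0A; lia.
    move=> C sC.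
    case: (set_0Vmem C) => [->|[c cC]]; first by rewrite cards0.
    have CA : C \proper A.
      apply/properP; split; first by apply: subset_trans sC (subsetDl _ _).
      exists i0 => //; apply/negP=> /(subsetP sC); by rewrite !inE eqxx.
    have := loose C; rewrite CA /=.
    have -> : (C != set0) by apply/set0Pn; exists c.
    rewrite /= -ltnNge => lt.
    have eqC : covr N' C = covr N C :\ j1.
      apply/setP=> j; rewrite !inE; apply/bigcupP/andP.
        by case=> i iC; rewrite !inE => /andP[a b]; split => //; apply/bigcupP; exists i.
      by case=> a /bigcupP[i iC jN]; exists i; rewrite // !inE a.
    rewrite eqC; have := cardsD1 j1 (covr N C); lia.
  exists (fun i => if i == i0 then j1 else f2 i); split.
    move=> i j iA jA; case: eqP => ei; case: eqP => ej.
    + by rewrite ei ej.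
    + move=> e; have : f2 j \in N' j by apply: N2; rewrite !inE jA andbT; apply/eqP.
      by rewrite -e !inE eqxx.
    + move=> e; have : f2 i \in N' i by apply: N2; rewrite !inE iA andbT; apply/eqP.
      by rewrite e !inE eqxx.
    + by apply: inj2; rewrite !inE ?iA ?jA andbT; apply/eqP.
  move=> i iA; case: eqP => [->//|ne].
  have : f2 i \in N' i by apply: N2; rewrite !inE iA andbT; apply/eqP.
  by rewrite !inE => /andP[].
Qed.

Lemma hall (N : I -> {set J}) :
  (forall L : {set I}, #|L| <= #|covr N L|) ->
  exists f : I -> J, injective f /\ forall i, f i \in N i.
Proof.
move=> HN; have [f [inj Nf]] := @hall_gen #|[set: I]| [set: I] N (leqnn _) (fun L _ => HN L).
by exists f; split=> [i j|i]; [apply: inj|apply: Nf]; rewrite inE.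
Qed.
End Hall.


Section Cyc.
Variables (V E : finType) (src tgt : E -> V).
Notation joins := (joins src tgt).
Notation adjF := (adjF src tgt).

Lemma cyc_of_conn (S : {set E}) (D : {set V}) e p q :
  no_S_cycle src tgt S D -> e \in S -> joins e p q -> p \notin D -> q \notin D ->
  p != q /\ ~~ connect (adjF [set~ e] D) p q.
Proof.
move=> NC eS J pD qD.
suff NOT : p = q \/ connect (adjF [set~ e] D) p q -> False.
  by split; [apply/negP => /eqP pq|apply/negP => c]; apply: NOT; tauto.
case=> [pq|].
  apply: NC; exists 0, (fun _ => p), (fun _ => e); split.
  - split; first by move=> i j _; rewrite (ord1 i) (ord1 j).
    split; first by move=> i j _; rewrite (ord1 i) (ord1 j).
    by move=> i; move: J; rewrite pq.
  - by [].
  - by exists ord0.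
case/connectP=> s0 pth; case: (shortenP pth) => s pth' U _ lst.
pose n := size s.
pose vl := p :: s.
pose ebw u w := odflt e [pick e' | (e' != e) && joins e' u w].
have ebwP u w : (exists e', (e' != e) && joins e' u w) -> (ebw u w != e) && joins (ebw u w) u w.
  by move=> [e' H]; rewrite /ebw; case: pickP => [//|/(_ e')]; rewrite H.
have step i : i < n -> adjF [set~ e] D (nth p vl i) (nth p vl i.+1).
  by move=> lt; exact: (pathP p pth' i lt).
have stepE i : i < n -> (ebw (nth p vl i) (nth p vl i.+1) != e) &&
                     joins (ebw (nth p vl i) (nth p vl i.+1)) (nth p vl i) (nth p vl i.+1).
  move=> /step /and3P[/existsP[e' /andP[e'F J']] _ _]; apply: ebwP; exists e'.
  by move: e'F; rewrite !inE => ->.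
pose vs (i : 'I_n.+1) := nth p vl i.
pose es (i : 'I_n.+1) := if i < n then ebw (nth p vl i) (nth p vl i.+1) else e.
have lastq : nth p vl n = q.
  by rewrite lst /vl -(last_cons p p s) -nth_last.
apply: NC; exists n, vs, es; split.
- split.
    by move=> i j /eqP; rewrite /vs nth_uniq // => /eqP ij; apply: ord_inj.
  split.
    move=> i j; rewrite /es.
    case: ifP => ilt; case: ifP => jlt => eq.
    + have /andP[_ Ji] := stepE _ ilt; have /andP[_ Jj] := stepE _ jlt.
      rewrite eq in Ji.
      have sz : size vl = n.+1 by [].
      have nthinj a b : a < n.+1 -> b < n.+1 -> nth p vl a = nth p vl b -> a = b.
        by move=> ha hb /eqP; rewrite nth_uniq // => /eqP.
      apply: ord_inj => /=.
      case: (joins_inv Jj Ji) => [[h1 _]|[h1 h2]].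
        by have := nthinj _ _ (ltn_ord j) (ltn_ord i) h1; lia.
      have ii : i.+1 < n.+1 by lia.
      have jj : j.+1 < n.+1 by lia.
      have := nthinj _ _ (ltn_ord j) ii h1; have := nthinj _ _ jj (ltn_ord i) h2; lia.
    + by have /andP[/eqP[]] := stepE _ ilt.
    + by have /andP[/eqP[]] := stepE _ jlt.
    + by apply: ord_inj; move/negbT: ilt; move/negbT: jlt; have := ltn_ord i; have := ltn_ord j; lia.
  move=> i; rewrite /es /vs; case: ifP => ilt.
    have -> : nat_of_ord (ordS i) = i.+1 by rewrite /= modn_small.
    by have /andP[] := stepE _ ilt.
  have iN : nat_of_ord i = n by move/negbT: ilt; have := ltn_ord i; lia.
  have -> : nat_of_ord (ordS i) = 0 by rewrite /= iN modnn.
  by rewrite iN lastq /= joinsC.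
- move=> [i lt]; rewrite /vs /=; case: i lt => [|j] lt //=.
  by have /and3P[_ _] := step j lt.
- exists ord_max; by rewrite /es /= ltnn.
Qed.

Lemma conn_of_cyc n (vs : 'I_n.+1 -> V) (es : 'I_n.+1 -> E) (D : {set V}) i0 :
  is_cycle src tgt vs es -> (forall i, vs i \notin D) ->
  connect (adjF [set~ es i0] D) (vs (ordS i0)) (vs i0).
Proof.
move=> [_ [einj J]] vD.
pose it m := iter m (@ordS n.+1) i0.
have itv m : nat_of_ord (it m) = (i0 + m) %% n.+1.
  elim: m => [|m IH]; first by rewrite addn0 modn_small.
  by rewrite /it iterS /= -/(it m) IH -addn1 modnDml addn1 addnS.
have key m : 0 < m -> m <= n.+1 -> connect (adjF [set~ es i0] D) (vs (it 1)) (vs (it m)).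
  elim: m => [//|m IH] _ le.
  case: m IH le => [|m] IH le; first by [].
  apply: connect_trans (IH isT (ltnW le)) _; apply: connect1.
  apply/and3P; split; last by [].
    apply/existsP; exists (es (it m.+1)); rewrite J !inE andbT.
    apply/negP=> /eqP /einj e1.
    have := itv m.+1; rewrite e1 => h.
    have : (i0 + m.+1) %% n.+1 = i0 %% n.+1 by rewrite -h modn_small.
    move/eqP; rewrite -[X in _ == X %% _]addn0 eqn_modDl mod0n modn_small //; lia.
  by [].
have := key n.+1 isT (leqnn _).
have -> : it n.+1 = i0 by apply: ord_inj; rewrite itv modnDr modn_small.
by [].
Qed.
End Cyc.


Lemma conn_add (T : finType) (R R' : rel T) p q u w :
  (forall a b, R' a b -> R a b \/ (a = p /\ b = q) \/ (a = q /\ b = p)) ->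
  connect R' u w ->
  connect R u w \/ (connect R u p /\ connect R q w) \/ (connect R u q /\ connect R p w).
Proof.
move=> H /connectP[s pth ->]; elim: s u pth => [|d s IH] u /=; first by left.
case/andP=> Rud /IH.
case: (H _ _ Rud) => [Ru|[[-> ->]|[-> ->]]].
- case=> [c|[[c1 c2]|[c1 c2]]].
  + by left; apply: connect_trans c; apply: connect1.
  + by right; left; split=> //; apply: connect_trans c1; apply: connect1.
  + by right; right; split=> //; apply: connect_trans c1; apply: connect1.
- case=> [c|[[c1 c2]|[c1 c2]]].
  + by right; left.
  + by right; left.
  + by left.
- case=> [c|[[c1 c2]|[c1 c2]]].
  + by right; right.
  + by left.
  + by right; right.
Qed.

Section Sep.
Variables (V E : finType) (src tgt : E -> V) (S : {set E}) (X : {set V}).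
Hypothesis NC : no_S_cycle src tgt S X.
Notation joins := (joins src tgt).
Notation adjF := (adjF src tgt).
Notation T := (VS src tgt S).
Notation R0 := (adjF (~: S) X).

Definition Fs (s : seq E) : {set E} := ~: S :|: [set e in s].

Lemma inVS e : e \in S -> src e \in T /\ tgt e \in T.
Proof. by move=> eS; rewrite !inE; split; apply/existsP; exists e; rewrite eS eqxx ?orbT. Qed.

Lemma sep_gen (K : {set V}) (s : seq E) : exists Z : {set V},
  [/\ Z \subset T :\: X,
      #|Z| + #|[set root (adjF (Fs s) X) r | r in K]| <= #|K| &
      forall u w, u \notin X :|: Z -> w \notin X :|: Z ->
        root R0 u \in K -> root R0 w \in K -> root R0 u != root R0 w ->
        ~~ connect (adjF (Fs s) (X :|: Z)) u w].
Proof.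
elim: s => [|e s [Z [ZT card sep]]].
  exists set0; split.
  - exact: sub0set.
  - by rewrite cards0 add0n leq_imset_card.
  - move=> u w uZ wZ _ _ ne; apply/negP=> c; move/negP: ne; apply; rewrite root_connect; last exact: adjF_csym.
    apply: adjF_mono c; first by rewrite /Fs; apply/subsetP=> f; rewrite !inE orbF.
    by apply/subsetP=> v; rewrite inE => ->.
pose Rs := adjF (Fs s) X.
pose Re := adjF (Fs (e :: s)) X.
have FsE : Fs (e :: s) = e |: Fs s.
  by apply/setP=> f; rewrite /Fs !inE; case: (f == e); rewrite ?orbT.
have imgE : [set root Re r | r in K] = [set root Re r | r in [set root Rs r | r in K]].
  apply/setP=> y; apply/imsetP/imsetP=> -[r rK ->].
    exists (root Rs r); first by apply/imsetP; exists r.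
    apply/rootP; first exact: adjF_csym.
    apply: adjF_mono (connect_root _ _) => //; rewrite FsE; exact: subsetUr.
  case/imsetP: rK => r' r'K ->; exists r' => //.
  apply/esym/rootP; first exact: adjF_csym.
  apply: adjF_mono (connect_root _ _) => //; rewrite FsE; exact: subsetUr.
case: (boolP (e \in Fs s)) => eF.
  have -> : Fs (e :: s) = Fs s by rewrite FsE; apply/setUidPr; rewrite sub1set.
  by exists Z.
have eS : e \in S by move: eF; rewrite /Fs !inE negb_or negbK => /andP[].
pose p := src e; pose q := tgt e.
have Jpq : joins e p q by rewrite /joins !eqxx.
case: (boolP ((p \in X) || (q \in X))) => pqX.
  have eqR (D : {set V}) : X \subset D -> adjF (Fs (e :: s)) D =2 adjF (Fs s) D.
    move=> XD a b; rewrite /adjF FsE; apply/and3P/and3P => -[/existsP[f /andP[fF J]] aD bD]; split=> //.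
    - apply/existsP; exists f; rewrite J andbT; move: fF; rewrite !inE; case/orP=> // /eqP fe.
      move: pqX; rewrite fe in J; case: (joins_inv J Jpq) => -[<- <-]; case/orP=> /(subsetP XD);
        by rewrite ?(negbTE aD) ?(negbTE bD).
    - by apply/existsP; exists f; rewrite J inE fF orbT.
  exists Z; split=> //.
    rewrite (eq_imset _ (eq_root (eqR _ (subxx _)))); by [].
  move=> u w uZ wZ uK wK ne; rewrite (eq_connect (eqR _ (subsetUl _ _))).
  exact: sep.
have [pX qX] : p \notin X /\ q \notin X by move: pqX; rewrite negb_or => /andP[].
have [pq npq] := cyc_of_conn NC eS Jpq pX qX.
have nRs : ~~ connect Rs p q.
  apply: contra npq => c; apply: adjF_mono c => //.
  apply/subsetP=> f fF; rewrite !inE; apply/negP=> /eqP fe; move: eF; by rewrite -fe fF.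
pose rp := root Rs p; pose rq := root Rs q.
have rpq : rp != rq by apply: contra nRs; rewrite root_connect //; exact: adjF_csym.
have [pT qT] := inVS eS.
pose img := [set root Rs r | r in K].
have inimg y r : r \in K -> connect Rs r y -> root Rs y \in img.
  move=> rK c; apply/imsetP; exists r => //; apply/esym/rootP => //; exact: adjF_csym.
case: (boolP ((rp \in img) && (rq \in img))) => both.
- case/andP: both => rpI rqI.
  exists (p |: Z); split.
  + rewrite subUset ZT andbT sub1set inE pT pX //.
  + have le1 : #|p |: Z| <= #|Z|.+1 by rewrite cardsU1; case: (p \in Z).
    have : #|[set root Re r | r in K]| <= #|img :\ rq|.
      rewrite imgE.
      have -> : [set root Re r | r in img] = [set root Re r | r in img :\ rq].
        apply/setP=> y; apply/imsetP/imsetP => -[r rI ->]; last first.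
          by exists r => //; move: rI; rewrite inE => /andP[].
        case: (eqVneq r rq) => [rr|nr]; last by exists r => //; rewrite in_setD1 rI andbT.
        exists rp; first by rewrite in_setD1 rpI andbT.
        apply/rootP; first exact: adjF_csym.
        rewrite rr; apply: (@connect_trans _ _ q).
          rewrite adjF_csym; apply: adjF_mono (connect_root _ _) => //; rewrite FsE; exact: subsetUr.
        apply: (@connect_trans _ _ p).
          apply: connect1; rewrite /Re adjF_sym; apply/and3P; split=> //; apply/existsP; exists e; by rewrite Jpq FsE setU11.
        apply: (adjF_mono (F:=Fs s) (D:=X)); [rewrite FsE; exact: subsetUr|exact: subxx|exact: connect_root].
      exact: leq_imset_card.
    move=> h; have h2 := cardsD1 rq img; rewrite rqI in h2.
    move: le1 card h h2; rewrite -/img.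
    move: #|p |: Z| #|Z| #|img| #|img :\ rq| #|K| #|[set root Re r | r in K]| => a b c d f g.
    move=> h1 h3 h4 h5; have h6 : c = d.+1 by rewrite h5.
    clear -h1 h3 h4 h6; lia.
  + move=> u w uZ wZ uK wK ne; apply/negP => c.
    have uZ' : u \notin X :|: Z.
      by apply: contra uZ => /setUP[]H; apply/setUP; [left|right; apply/setU1P; right].
    have wZ' : w \notin X :|: Z.
      by apply: contra wZ => /setUP[]H; apply/setUP; [left|right; apply/setU1P; right].
    move/negP: (sep u w uZ' wZ' uK wK ne); apply.
    apply: connect_sub c => a b /and3P[/existsP[f /andP[fF J]] aD bD]; apply: connect1.
    apply/and3P; split.
    * apply/existsP; exists f; rewrite J andbT; move: fF; rewrite FsE => /setU1P[fe|//].
      rewrite fe in J; case: (joins_inv J Jpq) => -[ap bq].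
        by move: aD; rewrite ap !inE eqxx orbT.
      by move: bD; rewrite bq !inE eqxx orbT.
    * by move: aD; rewrite !inE !negb_or => /and3P[-> _ ->].
    * by move: bD; rewrite !inE !negb_or => /and3P[-> _ ->].
- exists Z; split=> //.
    rewrite imgE; apply: leq_trans card; rewrite leq_add2l; exact: leq_imset_card.
  move=> u w uZ wZ uK wK ne; apply/negP => c.
  have H a b : adjF (Fs (e :: s)) (X :|: Z) a b ->
      adjF (Fs s) (X :|: Z) a b \/ (a = p /\ b = q) \/ (a = q /\ b = p).
    case/and3P=> /existsP[f /andP[fF J]] aD bD; move: fF; rewrite FsE; case/setU1P.
      move=> fe; rewrite fe in J; right; case: (joins_inv J Jpq); tauto.
    by move=> fF; left; apply/and3P; split=> //; apply/existsP; exists f; rewrite fF.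
  have uR : root Rs u \in img.
    apply: (inimg _ (root R0 u) uK); rewrite adjF_csym.
    by apply: adjF_mono (connect_root _ _) => //; rewrite /Fs; exact: subsetUl.
  have wR : root Rs w \in img.
    apply: (inimg _ (root R0 w) wK); rewrite adjF_csym.
    by apply: adjF_mono (connect_root _ _) => //; rewrite /Fs; exact: subsetUl.
  have toRs a b : connect (adjF (Fs s) (X :|: Z)) a b -> root Rs a = root Rs b.
    move=> c'; apply/rootP; first exact: adjF_csym.
    apply: adjF_mono c' => //; exact: subsetUl.
  move/negP: both; apply.
  case: (conn_add H c) => [c'|[[c1 c2]|[c1 c2]]].
  + by move/negP: (sep u w uZ wZ uK wK ne).
  + by rewrite /rp /rq -(toRs _ _ c1) (toRs _ _ c2) uR wR.
  + by rewrite /rp /rq -(toRs _ _ c1) (toRs _ _ c2) uR wR.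
Qed.
End Sep.

Section Sep2.
Variables (V E : finType) (src tgt : E -> V) (S : {set E}) (X : {set V}).
Hypothesis NC : no_S_cycle src tgt S X.
Notation adjF := (adjF src tgt).
Notation T := (VS src tgt S).
Notation R0 := (adjF (~: S) X).

Lemma separate (K : {set V}) : exists Z : {set V},
  [/\ Z \subset T :\: X, #|Z| <= #|K|.-1 &
      forall u w, u \notin X :|: Z -> w \notin X :|: Z ->
        root R0 u \in K -> root R0 w \in K -> root R0 u != root R0 w ->
        ~~ connect (adjF setT (X :|: Z)) u w].
Proof.
have [Z [ZT card sep]] := sep_gen NC K (enum S).
have FT : Fs S (enum S) = setT.
  by apply/setP=> f; rewrite /Fs !inE mem_enum; case: (f \in S).
rewrite FT in card sep; exists Z; split=> //.
case: (set_0Vmem K) => [K0|[r rK]].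
  by move: card; rewrite K0 imset0 cards0 addn0 leqn0 => /eqP->.
have : 0 < #|[set root (adjF setT X) r0 | r0 in K]|.
  by rewrite card_gt0; apply/set0Pn; exists (root (adjF setT X) r); apply/imsetP; exists r.
move: card; move: #|Z| #|K| #|[set root (adjF setT X) r0 | r0 in K]| => a b c.
clear; lia.
Qed.
End Sep2.


Section Main.
Variables (V E : finType) (src tgt : E -> V).
Notation adjF := (adjF src tgt).
Notation joins := (joins src tgt).

Lemma conn_notin (F : {set E}) (D : {set V}) a b :
  connect (adjF F D) a b -> a \notin D -> b \notin D.
Proof.
case/connectP => s pth ->; elim: s a pth => //= c s IH a /andP[/and3P[_ _ cD] pth] _.
exact: IH pth cD.
Qed.

Variables (S : {set E}) (X : {set V}).
Hypothesis NC : no_S_cycle src tgt S X.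
Notation T := (VS src tgt S).
Notation R0 := (adjF (~: S) X).

Lemma joinsT e p q : e \in S -> joins e p q -> p \in T /\ q \in T.
Proof.
move=> eS J; have [sT tT] := inVS src tgt eS.
by case/orP: J => /andP[/eqP<- /eqP<-].
Qed.

Lemma adjT_notS f a b : joins f a b -> b \notin T -> f \notin S.
Proof.
move=> J bT; apply/negP=> fS; have [_ ] := joinsT fS J; by rewrite (negbTE bT).
Qed.

Lemma blobT u q : q \in T -> connect (adjF setT X) u q ->
  exists2 t, t \in T & connect R0 u t.
Proof.
move=> qT c.
have := @first_bad _ (adjF setT X) R0 predT (fun c => c \in T) u q.
case.
- move=> a b _ /and3P[/existsP[f /andP[_ J]] aX bX].
  case: (boolP (f \in S)) => fS.
    by right; have [] := joinsT fS J.
  by left; rewrite andbT; apply/and3P; split=> //; apply/existsP; exists f; rewrite inE fS.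
- by [].
- exact: c.
- by move=> c'; exists q.
- by case=> t c' tT; exists t.
Qed.

Variable B : {set V}.
Hypothesis BX : B \subset X.
Hypothesis BT : [disjoint B & T].

Definition Kset := [set root R0 v | v in [set v | [&& v \notin X,
   [exists b in B, adjGS src tgt S b v] & [exists t in T, connect R0 v t]]]].

Lemma notB v : v \in T -> v \notin B.
Proof. move=> vT; apply/negP=> vB; move: BT; rewrite disjoint_sym => /disjointFr/(_ vT); by rewrite vB. Qed.

Lemma notBT v : v \in B -> v \notin T.
Proof. by move=> vB; apply: contraL vB; apply: notB. Qed.

Lemma Ysol : exists Z : {set V},
  [/\ Z \subset T :\: X, #|Z| <= #|Kset|.-1 & no_S_cycle src tgt S ((X :\: B) :|: Z)].
Proof.
have [Z [ZT card sep]] := separate NC Kset.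
exists Z; split=> //.
move=> [n [vs [es [cyc vY [i0 eS]]]]].
set Y := (X :\: B) :|: Z in vY.
set e := es i0 in eS.
set p := vs i0; set q := vs (ordS i0).
have J : joins e p q by case: cyc => _ [_]; apply.
have cqp : connect (adjF [set~ e] Y) q p := conn_of_cyc i0 cyc vY.
have [pT qT] := joinsT eS J.
have notXZ v : v \in T -> v \notin Y -> v \notin X :|: Z.
  move=> vT vY'; apply: contra vY'; rewrite !inE; case/orP => [vX|->]; last by rewrite orbT.
  by rewrite vX notB.
have pXZ := notXZ p pT (vY i0); have qXZ := notXZ q qT (vY (ordS i0)).
have pX : p \notin X by apply: contra pXZ; rewrite inE => ->.
have qX : q \notin X by apply: contra qXZ; rewrite inE => ->.
have [_ npq] := cyc_of_conn NC eS J pX qX.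
pose Q := adjF [set~ e] (X :|: Z).
have QX a b : connect Q a b -> connect (adjF [set~ e] X) a b.
  by apply: adjF_mono => //; apply: subsetUl.
have step a b : a \notin B -> adjF [set~ e] Y a b ->
   (Q a b && (b \notin B)) \/ (exists2 β, β \in B & adjF [set~ e] Y a β).
  move=> aB /and3P[ex aY bY]; case: (boolP (b \in B)) => bB.
    by right; exists b => //; apply/and3P.
  left; rewrite andbT; apply/and3P; split=> //.
    by apply: contra aY; rewrite !inE; case/orP => [aX|->]; rewrite ?orbT // aX aB.
  by apply: contra bY; rewrite !inE; case/orP => [bX|->]; rewrite ?orbT // bX bB.
have side a b : a \in T -> a \notin X :|: Z -> connect (adjF [set~ e] Y) a b ->
    connect Q a b \/ exists u, [/\ connect Q a u, u \notin X :|: Z & root R0 u \in Kset].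
  move=> aT aXZ cab.
  case: (@first_bad _ _ Q (fun c => c \notin B) (fun a => exists2 β, β \in B & adjF [set~ e] Y a β) a b step (notB aT) cab) => [c|[u cu [β βB Ruβ]]]; first by left.
  right; exists u; have uXZ := conn_notin cu aXZ; split=> //.
  have uX : u \notin X by apply: contra uXZ; rewrite inE => ->.
  apply/imsetP; exists u => //; rewrite inE uX /=; apply/andP; split.
    case/and3P: Ruβ => /existsP[f /andP[_ Jf]] _ _.
    apply/existsP; exists β; rewrite βB /=; apply/existsP; exists f.
    by rewrite joinsC Jf andbT (adjT_notS Jf (notBT βB)).
  have : connect (adjF setT X) u a.
    rewrite adjF_csym; apply: adjF_mono cu; [exact: subsetT|exact: subsetUl].
  by case/(blobT aT) => t tT ct; apply/existsP; exists t; rewrite tT.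
have [c1|[u [cu uXZ uK]]] := side q p qT qXZ cqp.
  by move: npq; rewrite adjF_csym (QX _ _ c1).
have cpq : connect (adjF [set~ e] Y) p q by rewrite adjF_csym.
have [c2|[w [cw wXZ wK]]] := side p q pT pXZ cpq.
  by move: npq; rewrite (QX _ _ c2).
have SE : ~: S \subset [set~ e].
  by apply/subsetP=> f; rewrite !inE; apply: contra => /eqP->.
have ne : root R0 u != root R0 w.
  have sym0 := adjF_csym src tgt (~: S) X.
  apply/negP; move/eqP; move/(rootP sym0) => cuw.
  move/negP: npq; apply.
  apply: (@connect_trans _ _ w); first by apply: QX.
  apply: (@connect_trans _ _ u); last by rewrite adjF_csym; apply: QX.
  by rewrite adjF_csym; apply: adjF_mono cuw.
move/negP: (sep u w uXZ wXZ uK wK ne); apply.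
have QT a b : connect Q a b -> connect (adjF setT (X :|: Z)) a b.
  by apply: adjF_mono => //; apply: subsetT.
apply: (@connect_trans _ _ q); first by rewrite adjF_csym; apply: QT.
apply: (@connect_trans _ _ p); last by apply: QT.
apply: connect1; apply/and3P; split=> //.
by apply/existsP; exists e; rewrite inE joinsC J.
Qed.
End Main.


Section HC.
Variables (V E : finType) (src tgt : E -> V) (S : {set E}) (k : nat) (X : {set V}) (x : V).
Hypothesis dom : dominant src tgt S k X.
Hypothesis xX : x \in X :\: VS src tgt S.
Notation T := (VS src tgt S).

Lemma hallcond (B : {set V}) : B \subset X :\: T ->
  #|B| + 2 * (x \in B) <= #|Kset src tgt S X B|.
Proof.
move=> BXT.
have BX : B \subset X by apply: subset_trans BXT (subsetDl _ _).
have BT : [disjoint B & T].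
  apply/pred0P=> v /=; apply/negP=> /andP[vB vT].
  by move: (subsetP BXT v vB); rewrite inE vT.
case: dom => -[Xk NCX] minX.
have [Z [ZT cardZ NCY]] := Ysol NCX BT.
set Y := X :\: B :|: Z in NCY.
have cY : #|Y| <= #|X| - #|B| + #|Z|.
  have : #|X :\: B| = #|X| - #|B| by rewrite cardsD (setIidPr BX).
  have := leq_card_setU (X :\: B) Z; rewrite /Y; case=> h _ h2; rewrite -h2; exact: h.
have cB : #|B| <= #|X| by apply: subset_leq_card.
have ZX : [disjoint X & Z].
  apply/pred0P=> v /=; apply/negP=> /andP[vX vZ].
  by move: (subsetP ZT v vZ); rewrite !inE vX.
have cYT : #|X :&: T| + #|Z| <= #|Y :&: T|.
  have -> : #|X :&: T| + #|Z| = #|(X :&: T) :|: Z|.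
    rewrite cardsU; suff -> : X :&: T :&: Z = set0 by rewrite cards0 subn0.
    by rewrite -setIA [T :&: Z]setIC setIA (disjoint_setI0 ZX) set0I.
  apply: subset_leq_card; apply/subsetP=> v /setUP[/setIP[vX vT]|vZ]; apply/setIP; split=> //.
  - by apply/setUP; left; apply/setDP; split=> //; exact: (notB BT vT).
  - by apply/setUP; right.
  - by case/setDP: (subsetP ZT v vZ).
rewrite leqNgt; apply/negP => lt.
have key : #|Z| <= #|B| /\ (x \notin B -> #|Z| < #|B|).
  move: lt cardZ; case: (x \in B) => /=;
  move: #|Z| #|B| #|Kset src tgt S X B| => a b c; clear; lia.
have YX : #|Y| <= #|X|.
  case: key => k1 _; move: cY cB k1; move: #|Y| #|X| #|B| #|Z| => a b c d; clear; lia.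
have [m1 m2] := minX Y (conj (leq_trans YX Xk) NCY).
case: (boolP (x \in B)) => xB.
  have eq : #|Y| = #|X| by apply/eqP; rewrite eqn_leq YX m1.
  have := m2 eq.
  have b1 : 0 < #|B| by rewrite card_gt0; apply/set0Pn; exists x.
  move: cYT cY cB b1 eq; move: #|Y :&: T| #|X :&: T| #|Z| #|Y| #|X| #|B| => a b c d f g.
  clear; lia.
case: key => _ /(_ xB) k2.
move: m1 cY cB k2; move: #|Y| #|X| #|B| #|Z| => a b c d; clear; lia.
Qed.
End HC.


Section Fin.
Variables (V E : finType) (src tgt : E -> V) (S : {set E}) (k : nat) (X : {set V}) (x : V).
Hypothesis dom : dominant src tgt S k X.
Hypothesis xX : x \in X :\: VS src tgt S.
Notation T := (VS src tgt S).
Notation adjF := (adjF src tgt).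
Notation R0 := (adjF (~: S) X).

Definition g (i : 'I_#|X|.+2) : V := nth x (enum X) i.

Lemma xinX : x \in X. Proof. by case/setDP: xX. Qed.
Lemma xnotT : x \notin T. Proof. by case/setDP: xX. Qed.

Lemma szX : size (enum X) = #|X|. Proof. by rewrite cardE. Qed.

Lemma g_in i : g i \in X.
Proof.
rewrite /g; case: (ltnP i (size (enum X))) => lt.
  by rewrite -mem_enum; apply: mem_nth.
by rewrite nth_default // xinX.
Qed.

Definition ia : 'I_#|X|.+2 := inord (index x (enum X)).
Definition ib : 'I_#|X|.+2 := inord #|X|.
Definition ic : 'I_#|X|.+2 := inord #|X|.+1.

Lemma hidx : index x (enum X) < #|X|.
Proof. by rewrite -szX index_mem mem_enum xinX. Qed.

Lemma ia_val : nat_of_ord ia = index x (enum X).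
Proof. by rewrite /ia inordK //; have := hidx; lia. Qed.

Lemma ia_lt : nat_of_ord ia < #|X|.
Proof. rewrite ia_val; exact: hidx. Qed.
Lemma ib_val : nat_of_ord ib = #|X|. Proof. by rewrite /ib inordK. Qed.
Lemma ic_val : nat_of_ord ic = #|X|.+1. Proof. by rewrite /ic inordK. Qed.

Lemma g_x i : g i = x -> i \in [:: ia; ib; ic].
Proof.
rewrite /g => e; rewrite !inE; case: (ltnP i #|X|) => lt.
  apply/orP; left; apply/eqP; apply: ord_inj.
  by rewrite ia_val -e index_uniq ?szX ?enum_uniq.
have := ltn_ord i; rewrite ltnS leq_eqVlt => /orP[/eqP ei|ei].
  apply/orP; right; apply/orP; right; apply/eqP; apply: ord_inj; rewrite ic_val; lia.
apply/orP; right; apply/orP; left; apply/eqP; apply: ord_inj; rewrite ib_val; lia.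
Qed.

Lemma g_abc : [/\ g ia = x, g ib = x & g ic = x].
Proof.
split; rewrite /g.
- by rewrite ia_val nth_index ?mem_enum ?xinX.
- by rewrite nth_default // ib_val szX.
- by rewrite nth_default // ic_val szX.
Qed.

Lemma abc_neq : [/\ ia != ib, ib != ic & ia != ic].
Proof.
have := ia_lt => h.
by split; apply/eqP => /(congr1 (@nat_of_ord _)); rewrite ?ib_val ?ic_val; lia.
Qed.

Lemma g_inj i j : g i = g j -> i != j -> g i = x.
Proof.
rewrite /g => e ne.
case: (ltnP i #|X|) => li; last by rewrite nth_default // szX.
case: (ltnP j #|X|) => lj; last by rewrite e nth_default // szX.
move/eqP: e; rewrite nth_uniq ?szX ?enum_uniq // => /eqP e.
by move: ne; rewrite (ord_inj e) eqxx.
Qed.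

Definition Nset (y : V) : {set V} :=
  (if y \in T then [set y] else set0) :|:
  [set root R0 v | v in [set v | [&& v \notin X, adjGS src tgt S y v & [exists t in T, connect R0 v t]]]].

Definition Ni (i : 'I_#|X|.+2) := Nset (g i).

Lemma hall_ok (L : {set 'I_#|X|.+2}) : #|L| <= #|covr Ni L|.
Proof.
pose A := g @: L.
pose B := A :\: T.
have AX : A \subset X by apply/subsetP=> y /imsetP[i _ ->]; apply: g_in.
have BXT : B \subset X :\: T by apply: setSD.
have hc := @hallcond _ _ src tgt S k X x dom B BXT.
have c1 : #|L| <= #|A| + 2 * (x \in A).
  pose Lx := [set i in L | g i == x].
  have sLx : Lx \subset [:: ia; ib; ic] by apply/subsetP=> i; rewrite inE => /andP[_ /eqP/g_x].
  have cLx : #|Lx| <= 3 * (x \in A).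
    case: (boolP (x \in A)) => xA.
      by rewrite muln1; apply: leq_trans (subset_leq_card sLx) (card_size _).
    rewrite muln0 leqn0 cards_eq0; apply/eqP/setP=> i; rewrite !inE.
    apply/negP=> /andP[iL /eqP gi]; move/negP: xA; apply; rewrite -gi; exact: imset_f.
  have inj : {in L :\: Lx &, injective g}.
    move=> i j; rewrite !inE => /andP[ni iL] /andP[nj _] e; case: (eqVneq i j) => // ne.
    by move: ni; rewrite (g_inj e ne) eqxx iL.
  have cD : #|L :\: Lx| <= #|A :\ x|.
    rewrite -(card_in_imset inj); apply: subset_leq_card; apply/subsetP=> y /imsetP[i].
    rewrite !inE => /andP[ni iL] ->; rewrite iL /= in ni; rewrite ni /=; exact: imset_f.
  have hL : #|L| = #|L :\: Lx| + #|L :&: Lx|.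
    by rewrite addnC cardsID.
  have hLx : #|L :&: Lx| <= #|Lx| by apply: subset_leq_card; apply: subsetIr.
  have hA := cardsD1 x A.
  move: cLx cD hL hLx hA; case: (x \in A) => /=;
  move: #|L| #|L :\: Lx| #|L :&: Lx| #|Lx| #|A| #|A :\ x| => a b c d e f; clear; lia.
have c2 : #|A| = #|A :&: T| + #|B| by rewrite cardsID.
have c3 : (x \in A) = (x \in B) by rewrite /B inE xnotT.
have c4 : #|A :&: T| + #|Kset src tgt S X B| <= #|covr Ni L|.
  have dj : [disjoint A :&: T & Kset src tgt S X B].
    apply/pred0P=> r /=; apply/negP=> /andP[/setIP[rA _] /imsetP[v]].
    rewrite inE => /and3P[vX _ _] rv.
    have : r \notin X.
      rewrite rv; apply: (conn_notin (connect_root _ v)) vX.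
    by rewrite (subsetP AX r rA).
  have := leq_card_setU (A :&: T) (Kset src tgt S X B); case=> _ ee.
  move: (dj); rewrite -ee => /eqP <-.
  apply: subset_leq_card; apply/subsetP=> r /setUP[/setIP[/imsetP[i iL ->] gT]|/imsetP[v]].
    by apply/bigcupP; exists i => //; rewrite /Ni /Nset gT; apply/setUP; left; apply: set11.
  rewrite inE => /and3P[vX /existsP[b /andP[bB adj]] ex] ->.
  have : b \in A by case/setDP: bB.
  case/imsetP=> i iL bi; apply/bigcupP; exists i => //.
  rewrite /Ni /Nset -bi; apply/setUP; right; apply/imsetP; exists v => //.
  by rewrite inE vX adj ex.
move: hc c1 c2 c4; rewrite c3.
move: #|B| #|L| #|A| #|A :&: T| #|Kset src tgt S X B| #|covr Ni L| => a b c d e f.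
case: (x \in B) => /=; clear; lia.
Qed.
End Fin.


Section Fin2.
Variables (V E : finType) (src tgt : E -> V) (S : {set E}) (X : {set V}) (x : V).
Notation T := (VS src tgt S).
Notation adjF := (adjF src tgt).
Notation R0 := (adjF (~: S) X).

Lemma path_for (y r : V) : y \in X -> r \in Nset src tgt S X y -> exists s : seq V,
  [/\ is_path_GS src tgt S s, head x s \in T, last x s = y,
      (forall v, v \in s -> v \in X -> v = y) &
      (forall v, v \in s -> v \notin X -> root R0 v = r)].
Proof.
move=> yX; case/setUP.
  case: ifP => yT; last by rewrite inE.
  move/set1P => ->; exists [:: y]; split=> //.
  - by move=> v; rewrite inE => /eqP.
  - by move=> v; rewrite inE => /eqP->; rewrite yX.
case/imsetP=> v; rewrite inE => /and3P[vX adj /existsP[t /andP[tT cvt]]] ->.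
have sym0 := adjF_csym src tgt (~: S) X.
have ctv : connect R0 t v by rewrite sym0.
have tX : t \notin X := conn_notin cvt vX.
case/connectP: ctv => s0 pth0 lst0.
move: lst0; case: (shortenP pth0) => s1 pth1 U1 _ lst.
have allnX z : z \in t :: s1 -> z \notin X /\ root R0 z = root R0 v.
  move=> zin; have ctz := path_connect pth1 zin.
  split; first exact: conn_notin ctz tX.
  apply/(rootP sym0); rewrite sym0; exact: connect_trans cvt ctz.
exists (rcons (t :: s1) y); split.
- change (uniq (rcons (t :: s1) y) && path (adjGS src tgt S) t (rcons s1 y)).
  rewrite rcons_uniq U1 andbT; apply/andP; split.
    by apply/negP=> /allnX[]; rewrite yX.
  rewrite rcons_path -lst adjGS_sym andbC adj /=.
  apply: sub_path pth1 => a b /and3P[/existsP[f /andP[fS J]] _ _].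
  by apply/existsP; exists f; rewrite J andbT; move: fS; rewrite inE.
- by [].
- by rewrite last_rcons.
- move=> z; rewrite mem_rcons inE => /orP[/eqP//|/allnX[zX _] zX']; by rewrite zX' in zX.
- move=> z; rewrite mem_rcons inE => /orP[/eqP->|/allnX[_ ->]]; by rewrite ?yX.
Qed.
End Fin2.


Theorem lemma4 (V E : finType) (src tgt : E -> V) (S : {set E}) (k : nat)
  (X : {set V}) (x : V) :
  dominant src tgt S k X ->
  x \in X :\: VS src tgt S ->
  exists (P : 'I_(#|X|.+2) -> seq V) (a b c : 'I_(#|X|.+2)),
    (forall i, is_path_GS src tgt S (P i)) /\
    (forall i, head x (P i) \in VS src tgt S) /\
    (forall i, last x (P i) \in X) /\
    (a != b /\ b != c /\ a != c) /\
    (last x (P a) = x /\ last x (P b) = x /\ last x (P c) = x) /\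
    (forall i j v, i != j -> v \in P i -> v \in P j ->
       v = x /\ i \in [:: a; b; c] /\ j \in [:: a; b; c]) /\
    (forall i j u w, i != j -> u \in P i -> w \in P j ->
       u \notin X -> w \notin X -> ~~ connect (adjGXS src tgt S X) u w).
Proof.
move=> dom xX.
have [f [finj fN]] := hall x (hall_ok dom xX).
have ex i := path_for x (g_in xX i) (fN i).
have [P HP] := fin_all_exists ex.
have [ga gb gc] := g_abc xX.
have [nab nbc nac] := abc_neq xX.
exists P, (ia X x), (ib X), (ic X).
have lastP i : last x (P i) = g x i by case: (HP i).
split; first by move=> i; case: (HP i).
split; first by move=> i; case: (HP i).
split; first by move=> i; rewrite lastP; apply: (g_in xX).
split; first by split; [|split].
split; first by rewrite !lastP; split; [|split].
split.
  move=> i j v ne vi vj.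
  case: (boolP (v \in X)) => vX.
    have [_ _ _ Xi _] := HP i; have [_ _ _ Xj _] := HP j.
    have e1 := Xi v vi vX; have e2 := Xj v vj vX.
    have gx : g x i = x by apply: (g_inj _ ne); rewrite -e1 -e2.
    split; first by rewrite e1.
    by split; [apply: (g_x xX) gx | apply: (g_x xX); rewrite -e2 e1 gx].
  have [_ _ _ _ Ri] := HP i; have [_ _ _ _ Rj] := HP j.
  have : f i = f j by rewrite -(Ri v vi vX) -(Rj v vj vX).
  by move/finj=> e; move: ne; rewrite e eqxx.
move=> i j u w ne ui wj uX wX; apply/negP=> c.
have [_ _ _ _ Ri] := HP i; have [_ _ _ _ Rj] := HP j.
have c' : connect (adjF src tgt (~: S) X) u w by rewrite -(eq_connect (adjGXS_F src tgt S X)).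
have : f i = f j.
  rewrite -(Ri u ui uX) -(Rj w wj wX); apply/(rootP (adjF_csym _ _ _ _)); exact: c'.
by move/finj=> e; move: ne; rewrite e eqxx.
Qed.
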